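(* Let $A,B\in\mathbb{C}^{n\times n}$ be Hermitian positive semidefinite matrices. For any integers $k,h\ge1$ with $kh+1\le n$, \[ \lambda_{kh+1}(A\circ B)\le\lambda_1(B)\,\mathrm{Tr}(A_{>k})+\lambda_1(A)\,\mathrm{Tr}(B_{>h})+\mathrm{Tr}(A_{>k})\,\mathrm{Tr}(B_{>h}), \] where $\mathrm{Tr}(M_{>r}):=\sum_{j=r+1}^{n}\lambda_j(M)$.
   Context: For a Hermitian matrix $M$, $\lambda_1(M)\ge\lambda_2(M)\ge\dots\ge\lambda_n(M)$ denote its eigenvalues in decreasing order. $A\circ B$ denotes the entrywise (Hadamard) product. *)

(* Defs.v *)
(* complex matrices over R[i] for R : realType (R[i] = C when R = the reals). *)
From HB Require Import structures.
From mathcomp Require Import all_boot all_order all_algebra.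
From mathcomp Require Import complex reals.
Set Implicit Arguments. Unset Strict Implicit. Unset Printing Implicit Defensive.
Import Order.TTheory GRing.Theory Num.Theory.
Local Open Scope ring_scope.

Section Spectral.
Variable R : realType.
Local Notation C := (R[i]).

Definition hermitian (n : nat) (A : 'M[C]_n) : Prop :=
  (map_mx Num.conj A)^T = A.

Definition psd (n : nat) (A : 'M[C]_n) : Prop :=
  hermitian A /\
  forall v : 'cV[C]_n, 0 <= ((map_mx Num.conj v)^T *m A *m v) 0 0.

Definition hadamard (n : nat) (A B : 'M[C]_n) : 'M[C]_n :=
  \matrix_(i, j) (A i j * B i j).

(* The eigenvalues of A with algebraic multiplicity: the roots of the
   (monic) characteristic polynomial, which splits over the closed field C. *)
Definition eigs (n : nat) (A : 'M[C]_n) : seq C :=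
  sval (closed_field_poly_normal (char_poly A)).

(* Eigenvalues (real parts; they are real for Hermitian A) in decreasing order. *)
Definition eigs_desc (n : nat) (A : 'M[C]_n) : seq R :=
  sort (fun x y : R => y <= x) [seq complex.Re z | z <- eigs A].

(* lambda A j = lambda_j(A), 1-indexed: lambda A 1 >= lambda A 2 >= ... *)
Definition lambda (n : nat) (A : 'M[C]_n) (j : nat) : R :=
  nth 0 (eigs_desc A) j.-1.

Definition trace_gt (n : nat) (A : 'M[C]_n) (r : nat) : R :=
  \sum_(r.+1 <= j < n.+1) lambda A j.

End Spectral.

(* Main.v *)
Require Import Defs.
From HB Require Import structures.
From mathcomp Require Import all_boot all_order all_algebra.
From mathcomp Require Import complex reals.
From mathcomp Require Import ring fingroup perm.
Import Order.TTheory GRing.Theory Num.Theory.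
Local Open Scope ring_scope.

Set Implicit Arguments. Unset Strict Implicit. Unset Printing Implicit Defensive.

Section Gen_k.
Variable C : numClosedFieldType.
Local Notation ct X := ((map_mx Num.conj X)^T).

Lemma kernel_vec p n (G : 'M[C]_(p, n)) : (p < n)%N ->
  exists2 v : 'cV[C]_n, v != 0 & G *m v = 0.
Proof.
move=> ltpn.
have rk : (0 < \rank (kermx G^T))%N.
  rewrite mxrank_ker subn_gt0; apply: leq_ltn_trans ltpn; exact: rank_leq_col.
have HK : kermx G^T != 0 by rewrite -mxrank_eq0 -lt0n.
have [i Hi] : exists i, row i (kermx G^T) != 0.
  apply/existsP; apply: contraNT HK => /existsPn Hr.
  apply/eqP/row_matrixP => i; rewrite row0; exact/eqP/negbNE/Hr.
exists (row i (kermx G^T))^T; first by rewrite trmx_eq0.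
have /sub_kermxP H := row_sub i (kermx G^T).
by rewrite -[G]trmxK -trmx_mul trmxK H trmx0.
Qed.
End Gen_k.

Section Gen_k2.
Variable C : numClosedFieldType.
Local Notation ct X := ((map_mx Num.conj X)^T).
Variable n : nat.

Definition qf (M : 'M[C]_n) (v : 'cV[C]_n) := ((ct v) *m M *m v) 0 0.

Lemma qfE M v : qf M v = \sum_p \sum_q (v p 0)^* * M p q * v q 0.
Proof.
rewrite /qf mxE exchange_big; apply: eq_bigr => q _.
rewrite mxE mulr_suml; apply: eq_bigr => p _.
by rewrite !mxE.
Qed.

Lemma ct_mul m p (X : 'M[C]_(m, n)) (Y : 'M[C]_(n, p)) : ct (X *m Y) = ct Y *m ct X.
Proof. by rewrite map_mxM trmx_mul. Qed.

Lemma qf_conj (U D : 'M[C]_n) v : qf (ct U *m D *m U) v = qf D (U *m v).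
Proof. by rewrite /qf ct_mul !mulmxA. Qed.

Lemma qf_diag (d : 'rV[C]_n) w :
  qf (diag_mx d) w = \sum_l (w l 0)^* * d 0 l * w l 0.
Proof.
rewrite qfE; apply: eq_bigr => l _.
rewrite (bigD1 l) //= big1 ?addr0; first by rewrite mxE eqxx mulr1n.
by move=> q /negbTE nq; rewrite mxE eq_sym nq mulr0n mulr0 mul0r.
Qed.

Lemma qf1 (w : 'cV[C]_n) : ((ct w) *m w) 0 0 = \sum_l (w l 0)^* * w l 0.
Proof. by rewrite mxE; apply: eq_bigr => l _; rewrite !mxE. Qed.

Lemma bessel (X Y : 'M[C]_n) (hX : ct X *m X = 1%:M) (hY : Y *m ct Y = 1%:M) i (v : 'cV[C]_n) :
  \sum_j (\sum_q X j q * Y i q * v q 0) * (\sum_q X j q * Y i q * v q 0)^*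
  <= \sum_q v q 0 * (v q 0)^*.
Proof.
pose w : 'cV[C]_n := \col_q (Y i q * v q 0).
have Hc j : \sum_q X j q * Y i q * v q 0 = (X *m w) j 0.
  by rewrite mxE; apply: eq_bigr => q _; rewrite mxE mulrA.
under eq_bigr do rewrite Hc mulrC.
rewrite -qf1 ct_mul -mulmxA (mulmxA (ct X)) hX mul1mx qf1.
apply: ler_sum => q _; rewrite mxE rmorphM /=.
rewrite [X in X <= _]mulrC -!mulrA [X in _ * X]mulrCA !mulrA.
rewrite -mulrA -[X in _ <= X]mul1r; apply: ler_wpM2r; first exact: mul_conjC_ge0.
have -> : 1 = (Y *m ct Y) i i by rewrite hY mxE eqxx.
rewrite mxE (bigD1 q) //= !mxE lerDl.
by apply: sumr_ge0 => q' _; rewrite !mxE mul_conjC_ge0.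
Qed.
End Gen_k2.

Section Gen_k3.
Variable C : numClosedFieldType.
Local Notation ct X := ((map_mx Num.conj X)^T).
Variable n : nat.

Lemma sp_entry (P : 'M[C]_n) (a : 'rV[C]_n) p q :
  (ct P *m diag_mx a *m P) p q = \sum_i (P i p)^* * a 0 i * P i q.
Proof. by rewrite mxE; apply: eq_bigr => i _; rewrite mul_mx_diag !mxE. Qed.

Lemma swap3 (F : 'I_n -> 'I_n -> 'I_n -> C) :
  \sum_p \sum_q \sum_i F p q i = \sum_i \sum_p \sum_q F p q i.
Proof.
under eq_bigr => p _ do rewrite exchange_big.
by rewrite exchange_big.
Qed.

Lemma had_expand (P Q : 'M[C]_n) (a b : 'rV[C]_n) (v : 'cV[C]_n) :
  qf (\matrix_(p, q) ((ct P *m diag_mx a *m P) p q * (ct Q *m diag_mx b *m Q) p q)) v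
  = \sum_i \sum_j a 0 i * b 0 j *
     ((\sum_q P i q * Q j q * v q 0) * (\sum_q P i q * Q j q * v q 0)^*).
Proof.
rewrite qfE.
transitivity (\sum_i \sum_j \sum_p \sum_q
   ((v p 0)^* * ((P i p)^* * a 0 i * P i q) * ((Q j p)^* * b 0 j * Q j q) * v q 0)).
  transitivity (\sum_p \sum_q \sum_i \sum_j
   ((v p 0)^* * ((P i p)^* * a 0 i * P i q) * ((Q j p)^* * b 0 j * Q j q) * v q 0)).
    apply: eq_bigr => p _; apply: eq_bigr => q _.
    rewrite mxE !sp_entry big_distrlr mulr_sumr mulr_suml.
    apply: eq_bigr => i _; rewrite mulr_sumr mulr_suml.
    by apply: eq_bigr => j _; rewrite !mulrA.
  rewrite swap3; apply: eq_bigr => i _; rewrite swap3.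
  apply: eq_bigr => j _.
  by [].
apply: eq_bigr => i _; apply: eq_bigr => j _.
rewrite rmorph_sum big_distrlr mulr_sumr exchange_big /=.
apply: eq_bigr => p _; rewrite mulr_sumr; apply: eq_bigr => q _.
rewrite !rmorphM /=; ring.
Qed.
End Gen_k3.

Section Gen_k4.
Variable C : numClosedFieldType.
Local Notation ct X := ((map_mx Num.conj X)^T).
Variable n : nat.

Lemma sub_sum_le (I : finType) (S : pred I) (F : I -> C) :
  (forall i, 0 <= F i) -> \sum_(i | S i) F i <= \sum_i F i.
Proof.
move=> F0; rewrite [X in _ <= X](bigID S) /= lerDl.
by apply: sumr_ge0 => i _; apply: F0.
Qed.

Lemma core (P Q U : 'M[C]_n) (a b mu : 'rV[C]_n)
  (hP1 : ct P *m P = 1%:M) (hP2 : P *m ct P = 1%:M)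
  (hQ1 : ct Q *m Q = 1%:M) (hQ2 : Q *m ct Q = 1%:M)
  (hU : ct U *m U = 1%:M)
  (ha : forall i, 0 <= a 0 i) (hb : forall j, 0 <= b 0 j)
  (hM : \matrix_(p, q) ((ct P *m diag_mx a *m P) p q * (ct Q *m diag_mx b *m Q) p q)
        = ct U *m diag_mx mu *m U)
  (SA SB SM : {set 'I_n}) (hcard : (#|SA| * #|SB| < #|SM|)%N)
  (LA LB mu0 : C)
  (hLA0 : 0 <= LA) (hLB0 : 0 <= LB)
  (hLA : forall i, a 0 i <= LA) (hLB : forall j, b 0 j <= LB)
  (hmu : forall l, l \in SM -> mu0 <= mu 0 l) :
  mu0 <= LB * (\sum_(i | i \notin SA) a 0 i) + LA * (\sum_(j | j \notin SB) b 0 j)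
         + (\sum_(i | i \notin SA) a 0 i) * (\sum_(j | j \notin SB) b 0 j).
Proof.
pose TT := setX SA SB.
pose G1 : 'M[C]_(#|TT|, n) := \matrix_(r, q) (P (enum_val r).1 q * Q (enum_val r).2 q).
pose G2 : 'M[C]_(#|~: SM|, n) := \matrix_(r, q) U (enum_val r) q.
have hp : (#|TT| + #|~: SM| < n)%N.
  have := cardsC SM; rewrite card_ord => HC.
  rewrite cardsX; apply: (@leq_trans (#|SM| + #|~: SM|)); last by rewrite HC.
  by rewrite ltn_add2r.
have [v vnz Gv] := kernel_vec (col_mx G1 G2) hp.
move: Gv; rewrite mul_col_mx => /eqP; rewrite col_mx_eq0 => /andP[/eqP G1v /eqP G2v].
pose c i j := \sum_q P i q * Q j q * v q 0.
pose e i j := c i j * (c i j)^*.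
pose N := \sum_q v q 0 * (v q 0)^*.
pose w := U *m v.
have e0 i j : 0 <= e i j by apply: mul_conjC_ge0.
have eSA i j : i \in SA -> j \in SB -> e i j = 0.
  move=> iS jS; have ij : (i, j) \in TT by apply/setXP.
  have /matrixP/(_ (enum_rank_in ij (i, j)) 0) := G1v.
  rewrite !mxE /= => H.
  rewrite /e /c; have -> : \sum_q P i q * Q j q * v q 0 =
     \sum_q G1 (enum_rank_in ij (i, j)) q * v q 0.
    by apply: eq_bigr => q _; rewrite /G1 mxE (enum_rankK_in ij ij).
  by rewrite H mul0r.
have wSM l : l \notin SM -> w l 0 = 0.
  move=> lS; have lS' : l \in ~: SM by rewrite inE.
  have /matrixP/(_ (enum_rank_in lS' l) 0) := G2v.
  rewrite !mxE /= => H.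
  apply: (etrans _ H); apply: eq_bigr => q _; by rewrite /G2 mxE (enum_rankK_in lS' lS').
have N0 : 0 <= N by apply: sumr_ge0 => q _; apply: mul_conjC_ge0.
have Npos : 0 < N.
  rewrite lt_def N0 andbT; apply: contra vnz => /eqP HN.
  apply/eqP/matrixP => q j; rewrite (ord1 j) mxE; apply/eqP; rewrite -mul_conjC_eq0.
  apply/eqP; exact: (@psumr_eq0P _ _ xpredT (fun q => v q 0 * (v q 0)^*) (fun q _ => mul_conjC_ge0 _) HN q isT).
have H1 j : \sum_i e i j <= N by exact: bessel hP1 hQ2 j v.
have H2 i : \sum_j e i j <= N.
  have Ec j : c i j = \sum_q Q j q * P i q * v q 0.
    by apply: eq_bigr => q _; rewrite (mulrC (P i q)).
  rewrite /e; under eq_bigr do rewrite Ec.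
  exact: bessel hQ1 hP2 i v.
have H3 i j : e i j <= N.
  by apply: le_trans (H1 j); rewrite (bigD1 i) //= lerDl; apply: sumr_ge0.
have Eq1 : qf (ct U *m diag_mx mu *m U) v = \sum_i \sum_j a 0 i * b 0 j * e i j.
  by rewrite -hM had_expand.
have Eq2 : qf (ct U *m diag_mx mu *m U) v = \sum_l (w l 0)^* * mu 0 l * w l 0.
  by rewrite qf_conj qf_diag.
have EqN : \sum_l (w l 0)^* * w l 0 = N.
  rewrite -qf1 /w ct_mul -mulmxA (mulmxA (ct U)) hU mul1mx qf1.
  by apply: eq_bigr => q _; rewrite mulrC.
have low : mu0 * N <= \sum_i \sum_j a 0 i * b 0 j * e i j.
  rewrite -Eq1 Eq2 -EqN mulr_sumr; apply: ler_sum => l _.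
  have [lS|lS] := boolP (l \in SM); last by rewrite wSM // !(mulr0, mul0r).
  rewrite mulrAC mulrC; apply: ler_wpM2l; last exact: hmu.
  by rewrite mulrC mul_conjC_ge0.
have up : \sum_i \sum_j a 0 i * b 0 j * e i j <=
   (LB * (\sum_(i | i \notin SA) a 0 i) + LA * (\sum_(j | j \notin SB) b 0 j)
         + (\sum_(i | i \notin SA) a 0 i) * (\sum_(j | j \notin SB) b 0 j)) * N.
  have P1 : \sum_(i | i \in SA) \sum_j a 0 i * b 0 j * e i j
      <= LA * (\sum_(j | j \notin SB) b 0 j) * N.
    apply: (@le_trans _ _ (\sum_(i | i \in SA) \sum_(j | j \notin SB) LA * b 0 j * e i j)).
      apply: ler_sum => i iSA; rewrite (bigID (fun j => j \in SB)) /= big1 ?add0r.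
        apply: ler_sum => j _; apply: ler_wpM2r; first exact: e0.
        by apply: ler_wpM2r; [exact: hb | exact: hLA].
      by move=> j jSB; rewrite eSA // mulr0.
    rewrite exchange_big /= [LA * _]mulr_sumr mulr_suml; apply: ler_sum => j _.
    rewrite -mulr_sumr; apply: ler_wpM2l; first by rewrite mulr_ge0.
    by apply: le_trans (H1 j); exact: sub_sum_le.
  have P2 : \sum_(i | i \notin SA) \sum_j a 0 i * b 0 j * e i j
      <= (\sum_(i | i \notin SA) a 0 i) * (LB + \sum_(j | j \notin SB) b 0 j) * N.
    rewrite mulr_suml mulr_suml; apply: ler_sum => i _.
    rewrite (bigID (fun j => j \in SB)) /= mulrDr mulrDl; apply: lerD.
      apply: (@le_trans _ _ (\sum_(j | j \in SB) a 0 i * LB * e i j)).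
        apply: ler_sum => j _; apply: ler_wpM2r; first exact: e0.
        by apply: ler_wpM2l; [exact: ha | exact: hLB].
      rewrite -mulr_sumr; apply: ler_wpM2l; first by rewrite mulr_ge0.
      by apply: le_trans (H2 i); exact: sub_sum_le.
    rewrite [a 0 i * _]mulr_sumr mulr_suml; apply: ler_sum => j _.
    by apply: ler_wpM2l; [rewrite mulr_ge0 | exact: H3].
  rewrite (bigID (fun i => i \in SA)) /=.
  apply: le_trans (lerD P1 P2) _; rewrite le_eqVlt; apply/orP; left; apply/eqP.
  ring.
by have := le_trans low up; rewrite ler_pM2r.
Qed.
End Gen_k4.

Lemma char_poly_conj (R : comNzRingType) n (Q Q' D : 'M[R]_n) :
  Q' *m Q = 1%:M -> char_poly (Q' *m D *m Q) = char_poly D.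
Proof.
move=> hQ; rewrite /char_poly.
have -> : char_poly_mx (Q' *m D *m Q) =
    map_mx polyC Q' *m char_poly_mx D *m map_mx polyC Q.
  rewrite /char_poly_mx mulmxBr mulmxBl !map_mxM; congr (_ - _).
  by rewrite mul_mx_scalar -scalemxAl -map_mxM hQ map_mx1 scalemx1.
rewrite !det_mulmx mulrAC -det_mulmx -map_mxM hQ map_mx1 det1 mul1r //.
Qed.

Section Spec.
Variable C : numClosedFieldType.
Local Notation ct X := ((map_mx Num.conj X)^T).
Variable n : nat.

Lemma spec_decomp (X : 'M[C]_n) : ct X = X ->
  exists P : 'M[C]_n, exists d : 'rV[C]_n,
    [/\ ct P *m P = 1%:M, P *m ct P = 1%:M & X = ct P *m diag_mx d *m P].
Proof.
move=> hX.
have ctE (Y : 'M[C]_n) : ct Y = (Y ^t*)%sesqui by rewrite map_trmx.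
have hn : X \is normalmx by apply/normalmxP; rewrite -ctE hX.
have /orthomx_spectralP hXe := hn.
have hu := spectral_unitarymx X.
exists (spectralmx X), (spectral_diag X).
have h2 : spectralmx X *m ct (spectralmx X) = 1%:M by rewrite ctE; apply/unitarymxP.
split => //; first exact: mulmx1C.
by rewrite {1}hXe invmx_unitary // ctE.
Qed.
End Spec.

Local Notation ct X := ((map_mx Num.conj X)^T).

Lemma eig_facts (R : realType) n (X P : 'M[R[i]]_n) (d : 'rV[R[i]]_n) :
  ct P *m P = 1%:M -> X = ct P *m diag_mx d *m P ->
  exists s : 'S_n, (forall j : 'I_n, lambda X j.+1 = complex.Re (d 0 (s j))) /\
    (forall j j' : 'I_n, (j <= j')%N -> lambda X j'.+1 <= lambda X j.+1).
Proof.
move=> hP hX.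
have hcp : char_poly X = \prod_(z <- [seq d 0 i | i <- enum 'I_n]) ('X - z%:P).
  rewrite hX char_poly_conj // char_poly_trig ?diag_mx_is_trig //.
  rewrite big_map big_enum /=; apply: eq_bigr => i _; by rewrite mxE eqxx.
have hpe : perm_eq (eigs X) [seq d 0 i | i <- enum 'I_n].
  apply: prod_XsubC_eq; rewrite -hcp /eigs; case: closed_field_poly_normal => s /= ->.
  by rewrite (monicP (char_poly_monic X)) scale1r.
pose t := [tuple complex.Re (d 0 i) | i < n].
have hpt : perm_eq (eigs_desc X) t.
  rewrite /eigs_desc perm_sort; apply: (perm_trans (perm_map (@complex.Re R) hpe)).
  by rewrite -map_comp /t /=.
have [s hs] := tuple_permP hpt.
have hsz : size (eigs_desc X) = n by rewrite (perm_size hpt) size_tuple.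
have hnth (j : 'I_n) : lambda X j.+1 = complex.Re (d 0 (s j)).
  by rewrite /lambda /= hs nth_mktuple tnth_mktuple.
exists s; split => // j j' jj'.
rewrite /lambda /=.
have srt : sorted (fun x y : R => y <= x) (eigs_desc X).
  by apply: sort_sorted => x y; exact: le_total.
have tr : transitive (fun x y : R => y <= x).
  by move=> x y z /= h1 h2; exact: le_trans h2 h1.
have rf : reflexive (fun x y : R => y <= x) by move=> x /=.
apply: (sorted_leq_nth tr rf 0 srt); [by rewrite inE hsz | by rewrite inE hsz | exact: jj'].
Qed.


Lemma card_low n (s : 'S_n) m : (m <= n)%N ->
  #|[set i : 'I_n | ((s^-1)%g i < m)%N]| = m.
Proof.
move=> hm.
have -> : [set i : 'I_n | ((s^-1)%g i < m)%N] = (s^-1)%g @^-1: [set j : 'I_n | (j < m)%N].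
  by apply/setP => i; rewrite !inE.
rewrite card_preimset; last exact: perm_inj.
have -> : [set j : 'I_n | (j < m)%N] = [set widen_ord hm j | j in 'I_m].
  apply/setP => j; rewrite inE; apply/idP/imsetP => [jm | [x _ ->]]; last by rewrite /= ltn_ord.
  by exists (Ordinal jm) => //; apply: val_inj.
by rewrite card_imset ?card_ord //; by move=> x y /(congr1 val) /= xy; apply: val_inj.
Qed.

Lemma diag_ge0 (C : numClosedFieldType) n (X P : 'M[C]_n) (d : 'rV[C]_n) :
  (forall v, 0 <= qf X v) -> P *m ct P = 1%:M -> X = ct P *m diag_mx d *m P ->
  forall l, 0 <= d 0 l.
Proof.
move=> hq hP hX l; have := hq (col l (ct P)).
rewrite hX qf_conj colE mulmxA hP mul1mx qf_diag (bigD1 l) //= big1 ?addr0.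
  by rewrite !mxE !eqxx /= mulr1 conjC1 mul1r.
by move=> l' /negbTE hl; rewrite !mxE hl /= mulr0.
Qed.

Lemma trace_conv (R : realType) n (X : 'M[R[i]]_n) (d : 'rV[R[i]]_n) (s : 'S_n) k :
  (forall j : 'I_n, lambda X j.+1 = complex.Re (d 0 (s j))) ->
  (forall l, 0 <= d 0 l) ->
  ((trace_gt X k)%:C)%C = \sum_(i | i \notin [set i : 'I_n | ((s^-1)%g i < k)%N]) d 0 i.
Proof.
move=> hl hd.
rewrite /trace_gt big_add1 /= big_geq_mkord /= rmorph_sum.
rewrite [RHS](reindex_inj (@perm_inj _ s)) /=.
apply: eq_big => j; first by rewrite inE permK -leqNgt.
by move=> _; rewrite hl RRe_real // ger0_real.
Qed.

Unset Implicit Arguments.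

Theorem mainTheorem7 (R : realType) (n : nat) (A B : 'M[R[i]]_n)
    (k h : nat) :
  psd A -> psd B -> (1 <= k)%N -> (1 <= h)%N -> (k * h + 1 <= n)%N ->
  lambda (hadamard A B) (k * h + 1) <=
    lambda B 1 * trace_gt A k + lambda A 1 * trace_gt B h
    + trace_gt A k * trace_gt B h.
Proof.
move=> [hAh hAq] [hBh hBq] hk hh hn.
have [P [a [hP1 hP2 hAe]]] := spec_decomp hAh.
have [Q [b [hQ1 hQ2 hBe]]] := spec_decomp hBh.
have ha := diag_ge0 hAq hP2 hAe.
have hb := diag_ge0 hBq hQ2 hBe.
have hMh : ct (hadamard A B) = hadamard A B.
  apply/matrixP => i j; rewrite -[in RHS]hAh -[in RHS]hBh !mxE rmorphM.
  by [].
have [U [mu [hU1 hU2 hMe]]] := spec_decomp hMh.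
have hM : \matrix_(p, q) ((ct P *m diag_mx a *m P) p q * (ct Q *m diag_mx b *m Q) p q)
        = ct U *m diag_mx mu *m U by rewrite -hMe /hadamard -hAe -hBe.
have hMq : forall v, 0 <= qf (hadamard A B) v.
  move=> v; rewrite hMe -hM had_expand; apply: sumr_ge0 => i _; apply: sumr_ge0 => j _.
  by apply: mulr_ge0; [apply: mulr_ge0; [exact: ha | exact: hb] | exact: mul_conjC_ge0].
have hmu := diag_ge0 hMq hU2 hMe.
have [sA [lA sA_s]] := eig_facts hP1 hAe.
have [sB [lB sB_s]] := eig_facts hQ1 hBe.
have [sM [lM sM_s]] := eig_facts hU1 hMe.
have n0 : (0 < n)%N by apply: leq_trans hn; rewrite addn1.
pose i0 : 'I_n := Ordinal n0.
have hkh : (k * h < n)%N by rewrite -addn1.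
pose km : 'I_n := Ordinal hkh.
have hkn : (k <= n)%N by apply: leq_trans hn; apply: leq_trans (leq_addr 1 _); apply: leq_pmulr.
have hhn : (h <= n)%N by apply: leq_trans hn; apply: leq_trans (leq_addr 1 _); apply: leq_pmull.
pose SA := [set i : 'I_n | ((sA^-1)%g i < k)%N].
pose SB := [set i : 'I_n | ((sB^-1)%g i < h)%N].
pose SM := [set i : 'I_n | ((sM^-1)%g i < k * h + 1)%N].
have hcard : (#|SA| * #|SB| < #|SM|)%N by rewrite !card_low // addn1.
have hLA i : a 0 i <= a 0 (sA i0).
  have e1 := lA ((sA^-1)%g i); rewrite permKV in e1.
  have e2 := lA i0.
  rewrite -(RRe_real (ger0_real (ha i))) -(RRe_real (ger0_real (ha (sA i0)))) lecR -e1 -e2.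
  by apply: sA_s.
have hLB j : b 0 j <= b 0 (sB i0).
  have e1 := lB ((sB^-1)%g j); rewrite permKV in e1.
  have e2 := lB i0.
  rewrite -(RRe_real (ger0_real (hb j))) -(RRe_real (ger0_real (hb (sB i0)))) lecR -e1 -e2.
  by apply: sB_s.
have hmu' l : l \in SM -> mu 0 (sM km) <= mu 0 l.
  rewrite inE addn1 ltnS => hl.
  have e1 := lM ((sM^-1)%g l); rewrite permKV in e1.
  have e2 := lM km.
  rewrite -(RRe_real (ger0_real (hmu l))) -(RRe_real (ger0_real (hmu (sM km)))) lecR -e1 -e2.
  by apply: sM_s.
have := core hP1 hP2 hQ1 hQ2 hU1 ha hb hM hcard (ha _) (hb _) hLA hLB hmu'.
rewrite -lecR !rmorphD !rmorphM /= (trace_conv _ lA ha) (trace_conv _ lB hb).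
have eA := lA i0; have eB := lB i0; have eM := lM km; rewrite /= in eA eB eM.
rewrite addn1 eA eB eM !RRe_real ?ger0_real //.
Qed.
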